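(* Let $\alpha,\beta>0$, $a=1/\alpha$, $b=1/\beta$, $n\ge3$ and $1\le k\le n-2$. Let $S\in\overline{\mathcal{S}}_n$ be such that box $(n-k-1,k)$ is non-empty, and such that box $(n-k-1,k+1)$ or box $(n-k,k)$ is non-empty. Then $\mathbb{P}_{n,\alpha,\beta}(S)=O\!\left(\frac{1}{(n+a+b)^2}\right)$.
   Context: A staircase tableau of size $n$ has boxes $(i,j)$ with $i,j\ge1$ and $i+j\le n+1$, rows numbered from the top and columns from the left. An $\alpha/\beta$-staircase tableau of size $n$ is a filling in which each box is empty or contains $\alpha$ or $\beta$, such that: all boxes in the same column and above an $\alpha$ are empty; all boxes in the same row and to the left of a $\beta$ are empty; every main-diagonal box (with $i+j=n+1$) contains a symbol. $\overline{\mathcal{S}}_n$ is the set of these. The weight is $wt(S)=\alpha^{N_\alpha}\beta^{N_\beta}$ ($N_\alpha,N_\beta$ the numbers of $\alpha$'s, $\beta$'s), and $\mathbb{P}_{n,\alpha,\beta}(S)=wt(S)/\sum_{T\in\overline{\mathcal{S}}_n}wt(T)$. The boxes $(n-j-1,j)$, $1\le j\le n-2$, form the third main diagonal. *)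

(* Defs.v *)
From HB Require Import structures.
From mathcomp Require Import all_boot all_order all_algebra.
From mathcomp Require Import reals.
Set Implicit Arguments. Unset Strict Implicit. Unset Printing Implicit Defensive.
Import Order.TTheory GRing.Theory Num.Theory.

(* A filling of the n x n square grid; entry p = (i', j') (0-indexed) stands
   for the box (i'+1, j'+1) (1-indexed, row i'+1 from the top, column j'+1
   from the left).  None = empty box, Some true = alpha, Some false = beta. *)
Definition filling (n : nat) := {ffun 'I_n * 'I_n -> option bool}.

Definition is_tableau (n : nat) (S : filling n) : bool :=
  [forall p : 'I_n * 'I_n,
    [&& (n.+1 < p.1.+1 + p.2.+1)%N ==> (S p == None),
        (S p == Some true) ==>
          [forall i' : 'I_n, (i' < p.1)%N ==> (S (i', p.2) == None)],
        (S p == Some false) ==>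
          [forall j' : 'I_n, (j' < p.2)%N ==> (S (p.1, j') == None)] &
        (p.1.+1 + p.2.+1 == n.+1)%N ==> (S p != None)]].

Definition cell (n : nat) (S : filling n) (i j : nat) : option bool :=
  if (0 < i)%N && (0 < j)%N then
    match @insub _ (fun x => (x < n)%N) 'I_n i.-1,
          @insub _ (fun x => (x < n)%N) 'I_n j.-1 with
    | Some x, Some y => S (x, y)
    | _, _ => None
    end
  else None.

Local Open Scope ring_scope.

Definition wt (R : realType) (alpha beta : R) (n : nat) (S : filling n) : R :=
  alpha ^+ #|[set p | S p == Some true]| * beta ^+ #|[set p | S p == Some false]|.

Definition prob (R : realType) (alpha beta : R) (n : nat) (S : filling n) : R :=
  wt alpha beta S / \sum_(T : filling n | is_tableau T) wt alpha beta T.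

(* Main.v *)
Require Import Defs.
From HB Require Import structures.
From mathcomp Require Import all_boot all_order all_algebra.
From mathcomp Require Import reals zify ring lra.
Set Implicit Arguments. Unset Strict Implicit. Unset Printing Implicit Defensive.
Import Order.TTheory GRing.Theory Num.Theory.

Definition nf := nat -> nat -> option bool.

Definition tab (N : nat) (h : nf) : Prop :=
  forall s t, (s <= t)%N -> (t < N)%N ->
    [/\ (s = t -> h s s != None),
        (h s t = Some true -> forall s', (s' < s)%N -> h s' t = None) &
        (h s t = Some false -> forall t', (t < t')%N -> (t' < N)%N -> h s t' = None)].

Definition rem (h : nf) p : nf := fun s t => h (bump p s) (bump p t).

Definition hookpat p (c v hb : bool) s t : option bool :=
  if s == p then (if t == p then Some c else if hb && (t == p.+1) then Some false else None)
  else if t == p then (if v && (s.+1 == p) then Some true else None) else None.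

Definition ins (h : nf) p c v hb : nf := fun s t =>
  if (s == p) || (t == p) then hookpat p c v hb s t else h (s - (p < s)) (t - (p < t)).

Lemma bumpE p s : bump p s = if (p <= s)%N then s.+1 else s.
Proof. by rewrite /bump; case: leqP => _; rewrite ?add1n ?add0n. Qed.

Lemma tab_rem N h p : tab N.+1 h -> tab N (rem h p).
Proof.
move=> Th s t st tN; rewrite /rem.
have b1 : (bump p s <= bump p t)%N by rewrite /bump; lia.
have b2 : (bump p t < N.+1)%N by rewrite /bump; lia.
have [D A B] := Th _ _ b1 b2; split.
- by move=> e; subst; apply: D.
- by move=> H s' s's; apply: A => //; rewrite /bump; lia.
- by move=> H t' tt' t'N; apply: B => //; rewrite /bump; lia.
Qed.

Lemma tab_ins N h p (c v hb : bool) : tab N h -> (p <= N)%N ->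
  (v -> [/\ c = false, (0 < p)%N & h p.-1 p.-1 = Some true]) ->
  (hb -> [/\ c = true, (p < N)%N & h p p = Some false]) ->
  tab N.+1 (ins h p c v hb).
Proof.
move=> Th pN Hv Hh s t st tN; rewrite /ins /hookpat.
case: (eqVneq s p) => [->|sp]; case: (eqVneq t p) => [->|tp] /=.
-
  split => //.
  + move=> cT s' s'p; rewrite (ltn_eqF s'p) /=.
    case: v Hv => //= /(_ isT) [cf _ _]; by move: cT; rewrite cf.
  + move=> cF t' pt' t'N; rewrite (gtn_eqF pt') /=.
    case: hb Hh => //= /(_ isT) [ct _ _]; by move: cF; rewrite ct.
-
  split => //.
  + by case: ifP.
  + case: ifP => // /andP [hbT /eqP tE] _ t' tt' t'N.
    have -> : (t' == p) = false by lia.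
    have -> : (t' == p.+1) = false by lia.
    by rewrite andbF.
-
  split => //.
  + move=> e; subst; by rewrite eqxx in sp.
  + case: ifP => // /andP [vT /eqP sE] _ s' s's.
    have -> : (s' == p) = false by lia.
    have -> : (s'.+1 == p) = false by lia.
    by rewrite andbF.
  + by case: ifP.
-
  have st0 : (s - (p < s) <= t - (p < t))%N by lia.
  have tN0 : (t - (p < t) < N)%N by lia.
  have [D A B] := Th _ _ st0 tN0.
  split.
  + move=> e; subst; exact: D.
  + move=> H s' s's.
    case: (eqVneq s' p) => [E|s'p] /=.
    * subst s'.
      case: ifP => // /andP [hbT /eqP tE].
      have [_ _ Hpp] := Hh hbT.
      have e1 : s - (p < s) = p by lia.
      have e2 : t - (p < t) = p by lia.
      by move: H; rewrite e1 e2 Hpp.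
    * apply: A => //; lia.
  + move=> H t' tt' t'N.
    case: (eqVneq t' p) => [E|t'p] /=.
    * subst t'; idtac.
      case: ifP => // /andP [vT /eqP sE].
      have [_ p0 Hpp] := Hv vT.
      have e1 : s - (p < s) = p.-1 by lia.
      have e2 : t - (p < t) = p.-1 by lia.
      by move: H; rewrite e1 e2 Hpp.
    * apply: B => //; lia.
Qed.

Definition cnt (b : bool) N (h : nf) : nat :=
  \sum_(s < N) \sum_(t < N) ((s <= t) && (h s t == Some b)).

Definition hookcnt (b : bool) N (h : nf) p : nat :=
  ((h p p == Some b) + \sum_(t < N) ((p <= bump p t) && (h p (bump p t) == Some b))
   + \sum_(s < N) ((bump p s <= p) && (h (bump p s) p == Some b)))%N.

Lemma sum_split1 N p (pN1 : (p < N.+1)%N) (F : 'I_N.+1 -> nat) :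
  (\sum_(t < N.+1) F t = F (Ordinal pN1) + \sum_(t < N) F (lift (Ordinal pN1) t))%N.
Proof. by rewrite (bigD1_ord (Ordinal pN1)). Qed.

Lemma cnt_split b N h p : (p <= N)%N ->
  cnt b N.+1 h = (cnt b N (rem h p) + hookcnt b N h p)%N.
Proof.
move=> pN; have pN1 : (p < N.+1)%N by [].
rewrite /cnt /hookcnt (sum_split1 pN1) /= (sum_split1 pN1) /= leqnn /=.
set A := (X in (_ + X = _)%N).
have -> : A = (\sum_(s < N) ((bump p s <= p) && (h (bump p s) p == Some b)) +
    \sum_(s < N) \sum_(t < N) ((s <= t) && (rem h p s t == Some b)))%N.
  rewrite /A -big_split /=; apply: eq_bigr => i _.
  rewrite (sum_split1 pN1) /=; congr (_ + _)%N.
  by apply: eq_bigr => j _; rewrite leq_bump2.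
by rewrite addnA [RHS]addnC.
Qed.

Definition hook_is N (h : nf) p c v hb := forall s t, (s <= t)%N -> (t < N.+1)%N ->
  (s == p) || (t == p) -> h s t = hookpat p c v hb s t.

Lemma sum_eq1 N p (P : bool) : (\sum_(t < N) (P && (t == p :> nat)) = P && (p < N))%N.
Proof.
elim: N => [|N IH]; first by rewrite big_ord0 andbF.
rewrite big_ord_recr /= IH; clear IH; by case: P; rewrite /= ?addn0 /=; lia.

Qed.

Lemma hookcnt_pat b N h p c v hb : hook_is N h p c v hb -> (p <= N)%N ->
  (v -> 0 < p)%N -> (hb -> p < N)%N ->
  hookcnt b N h p = ((c == b) + (v && b) + (hb && ~~ b))%N.
Proof.
move=> Hh pN Hv Hb; rewrite /hookcnt.
rewrite Hh ?leqnn ?eqxx //= /hookpat eqxx.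
have -> : (Some c == Some b) = (c == b) by apply/eqP/eqP => [[]|->].
have -> : (\sum_(t < N) ((p <= bump p t) && (h p (bump p t) == Some b)) =
           \sum_(t < N) ((hb && ~~ b) && (t == p :> nat)))%N.
  apply: eq_bigr => t _.
  have := ltn_ord t; move=> tN0.
  have tN : (bump p t < N.+1)%N by rewrite /bump; lia.
  case: (leqP p (bump p t)) => pt /=; last by rewrite (_ : (t == p :> nat) = false) ?andbF //; rewrite /bump in pt; lia.
  rewrite Hh ?eqxx //= /hookpat eqxx.
  have -> : (bump p t == p) = false by rewrite /bump; lia.
  have -> : (bump p t == p.+1) = (t == p :> nat) by rewrite /bump; lia.
  by clear Hh Hb; case: hb; case: b; case: (t == p :> nat).
have -> : (\sum_(s < N) ((bump p s <= p) && (h (bump p s) p == Some b)) =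
           \sum_(s < N) ((v && b) && (s == p.-1 :> nat)))%N.
  apply: eq_bigr => s _.
  have := ltn_ord s; move=> sN0.
  case: (leqP (bump p s) p) => pt /=; last first.
    clear Hh; case: v Hv => [/(_ isT) p0|_] //=.
    by rewrite (_ : (s == p.-1 :> nat) = false) ?andbF //; rewrite /bump in pt; lia.
  rewrite Hh ?eqxx ?orbT //= /hookpat.
  have -> : (bump p s == p) = false by rewrite /bump; lia.
  rewrite eqxx.
  have -> : ((bump p s).+1 == p) = (s == p.-1 :> nat) by rewrite /bump in pt *; lia.
  by clear Hh; case: v Hv; case: b; case: (s == p.-1 :> nat).
rewrite !sum_eq1.
clear Hh; case: hb Hb => [/(_ isT) -> | _]; case: v Hv => [/(_ isT) ? | _] /=; rewrite ?andbT ?andbF //.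
all: try (have -> : (p.-1 < N)%N by lia); rewrite ?andbT ?addn0 //; exact: addnAC.
Qed.

Lemma cnt_ext b N (h1 h2 : nf) : (forall s t, h1 s t = h2 s t) -> cnt b N h1 = cnt b N h2.
Proof. by move=> E; apply: eq_bigr => s _; apply: eq_bigr => t _; rewrite E. Qed.

Lemma cnt_hook b N h p c v hb : hook_is N h p c v hb -> (p <= N)%N ->
  (v -> 0 < p)%N -> (hb -> p < N)%N ->
  cnt b N.+1 h = (cnt b N (rem h p) + ((c == b) + (v && b) + (hb && ~~ b)))%N.
Proof. by move=> H pN Hv Hb; rewrite (cnt_split b h pN) (hookcnt_pat b H pN Hv Hb). Qed.

Lemma rem_ins h p (c v hb : bool) s t : rem (ins h p c v hb) p s t = h s t.
Proof.
rewrite /rem /ins.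
have -> : (bump p s == p) = false by rewrite /bump; lia.
have -> : (bump p t == p) = false by rewrite /bump; lia.
by congr h; rewrite /bump; lia.
Qed.

Lemma cnt_ins b N h p (c v hb : bool) : (p <= N)%N -> (v -> 0 < p)%N -> (hb -> p < N)%N ->
  cnt b N.+1 (ins h p c v hb) = (cnt b N h + ((c == b) + (v && b) + (hb && ~~ b)))%N.
Proof.
move=> pN Hv Hb.
have H : hook_is N (ins h p c v hb) p c v hb by move=> s t _ _ /=; rewrite /ins => ->.
by rewrite (cnt_hook b H pN Hv Hb) (cnt_ext _ _ (rem_ins h p c v hb)).
Qed.

Definition ffun_of n (h : nf) : filling n :=
  [ffun p : 'I_n * 'I_n => if (p.1 + p.2 < n)%N then h p.1 (n.-1 - p.2) else None].

Lemma tab_ffun n h : tab n h -> is_tableau (ffun_of n h).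
Proof.
move=> Th; apply/forallP => -[i j] /=; rewrite !ffunE /=.
have iN := ltn_ord i; have jN := ltn_ord j.
apply/and4P; split.
- apply/implyP => H; case: ifP => //; lia.
- apply/implyP; case: ifP => // ij /eqP H; apply/forallP => i'; apply/implyP => i'i.
  rewrite ffunE /=; case: ifP => // _.
  have [_ A _] := Th i (n.-1 - j) ltac:(lia) ltac:(lia).
  by rewrite (A H).
- apply/implyP; case: ifP => // ij /eqP H; apply/forallP => j'; apply/implyP => j'j.
  rewrite ffunE /=; case: ifP => // _.
  have [_ _ B] := Th i (n.-1 - j) ltac:(lia) ltac:(lia).
  by rewrite (B H) //; lia.
- apply/implyP => /eqP H; case: ifP => ij; last lia.
  have [D _ _] := Th i (n.-1 - j) ltac:(lia) ltac:(lia).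
  have e : n.-1 - j = i by lia.
  by rewrite e; apply: D.
Qed.

Lemma card_ffun n h b :
  #|[set p | ffun_of n h p == Some b]| = cnt b n h.
Proof.
rewrite -sum1dep_card big_mkcond /=.
rewrite (eq_bigr (fun p => (fun i j => if ffun_of n h (i, j) == Some b then 1%N else 0%N) p.1 p.2));
  last by case.
rewrite -(pair_bigA _ (fun i j => if ffun_of n h (i, j) == Some b then 1%N else 0%N)) /=.
apply: eq_bigr => i _.
rewrite (reindex_inj rev_ord_inj) /=; apply: eq_bigr => j _.
rewrite ffunE /=.
have iN := ltn_ord i; have jN := ltn_ord j.
case: (leqP i j) => ij.
- rewrite (_ : (i + (n - j.+1) < n)%N = true); last lia.
  have -> : n.-1 - (n - j.+1) = j by lia.
  by case: (_ == _).
- by rewrite (_ : (i + (n - j.+1) < n)%N = false) //; lia.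
Qed.

Lemma wt_ffun (R : realType) (al be : R) n h :
  wt al be (ffun_of n h) = (al ^+ cnt true n h * be ^+ cnt false n h)%R.
Proof. by rewrite /wt !card_ffun. Qed.

Lemma ffun_diag n h1 h2 : ffun_of n h1 = ffun_of n h2 ->
  forall r, (r < n)%N -> h1 r r = h2 r r.
Proof.
move=> E r rn.
have jn : (n.-1 - r < n)%N by lia.
have := congr1 (fun F : filling n => F (Ordinal rn, Ordinal jn)) E; rewrite /= !ffunE /=.
have -> : (r + (n.-1 - r) < n)%N = true by lia.
by have -> : n.-1 - (n.-1 - r) = r by lia.
Qed.

Lemma tab_of_ffun n h : is_tableau (ffun_of n h) -> tab n h.
Proof.
move=> T s t st tN.
have sn : (s < n)%N by lia.
have jn : (n.-1 - t < n)%N by lia.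
have /and4P [_ HA HB HD] := forallP T (Ordinal sn, Ordinal jn).
rewrite !ffunE /= in HA HB HD.
have e1 : (s + (n.-1 - t) < n)%N = true by lia.
have e2 : n.-1 - (n.-1 - t) = t by lia.
rewrite e1 e2 in HA HB HD.
split.
- move=> e; subst t; apply: (implyP HD); lia.
- move=> H s' s's; move: HA; rewrite H eqxx /= => /forallP /(_ (Ordinal (ltn_trans s's sn))).
  rewrite s's ffunE /=.
  have -> : (s' + (n.-1 - t) < n)%N = true by lia.
  by rewrite e2 => /eqP.
- move=> H t' tt' t'n; move: HB; rewrite H eqxx /=.
  have j'n : (n.-1 - t' < n)%N by lia.
  move=> /forallP /(_ (Ordinal j'n)); rewrite ffunE /=.
  have -> : (n.-1 - t' < n.-1 - t)%N = true by lia.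
  have -> : (s + (n.-1 - t') < n)%N = true by lia.
  rewrite (_ : n.-1 - (n.-1 - t') = t') /=; last lia.
  by move=> /eqP.
Qed.

Definition hS n (S : filling n) : nf := fun s t =>
  if (insub s : option 'I_n) is Some x then
    if (insub (n.-1 - t) : option 'I_n) is Some y then S (x, y) else None
  else None.

Lemma hS_val n (S : filling n) (i j : 'I_n) : hS S i (n.-1 - j) = S (i, j).
Proof.
rewrite /hS valK.
have -> : n.-1 - (n.-1 - j) = j by have := ltn_ord j; lia.
by rewrite valK.
Qed.

Lemma ffun_hS n (S : filling n) : is_tableau S -> ffun_of n (hS S) = S.
Proof.
move=> T; apply/ffunP => -[i j]; rewrite ffunE /=.
case: ifP => ij; first by rewrite hS_val.
have /and4P [H _ _ _] := forallP T (i, j).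
by apply/esym/eqP; apply: (implyP H) => /=; lia.
Qed.

Lemma tab_hS n (S : filling n) : is_tableau S -> tab n (hS S).
Proof. by move=> T; apply: tab_of_ffun; rewrite ffun_hS. Qed.

Lemma eq_some (x y : bool) : (Some x == Some y) = (x == y).
Proof. by apply/eqP/eqP => [[]|->]. Qed.

Lemma stage1 N h m : tab N.+2 h -> (m < N)%N -> h m m.+2 != None ->
  (h m m.+1 != None \/ h m.+1 m.+2 != None) ->
  forall b, cnt b N.+2 h = (cnt b N.+1 (rem h m.+1) + 1)%N.
Proof.
move=> Th mN HX HRD b.
have [D2 A2 B2] := Th m.+1 m.+1 (leqnn _) ltac:(lia).
case: HRD => [HR|HD].
- have [_ AR BR] := Th m m.+1 ltac:(lia) ltac:(lia).
  have d2 : h m.+1 m.+1 = Some false.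
    case E: (h m.+1 m.+1) (D2 erefl) => [[|]|] //= _.
    by move: HR; rewrite (A2 E m) //; lia.
  have R : h m m.+1 = Some true.
    case E: (h m m.+1) HR => [[|]|] //= _.
    by move: HX; rewrite (BR E m.+2) //; lia.
  have H : hook_is N.+1 h m.+1 false true false.
    move=> s t st tN.
    case: (eqVneq s m.+1) => [Es|sn] /=.
    + subst s; move=> _; rewrite /hookpat eqxx.
      case: (eqVneq t m.+1) => [->|tn] //=.
      by apply: B2 => //; lia.
    + move=> /eqP Et; subst t; rewrite /hookpat (negbTE sn) eqxx /=.
      case: (eqVneq s.+1 m.+1) => [[->]|sm] //=.
      by apply: AR => //; lia.
  rewrite (cnt_hook b H) //; lia.
- have [_ AD BD] := Th m.+1 m.+2 ltac:(lia) ltac:(lia).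
  have d2 : h m.+1 m.+1 = Some true.
    case E: (h m.+1 m.+1) (D2 erefl) => [[|]|] //= _.
    by move: HD; rewrite (B2 E m.+2) //; lia.
  have D : h m.+1 m.+2 = Some false.
    case E: (h m.+1 m.+2) HD => [[|]|] //= _.
    by move: HX; rewrite (AD E m) //; lia.
  have H : hook_is N.+1 h m.+1 true false true.
    move=> s t st tN.
    case: (eqVneq s m.+1) => [Es|sn] /=.
    + subst s; move=> _; rewrite /hookpat eqxx.
      case: (eqVneq t m.+1) => [->|tn] //=.
      case: (eqVneq t m.+2) => [->|tn2] //=.
      by apply: BD => //; lia.
    + move=> /eqP Et; subst t; rewrite /hookpat (negbTE sn) eqxx /=.
      by apply: A2 => //; lia.
  rewrite (cnt_hook b H) //; case: b; lia.
Qed.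

Lemma stage2 N h m : tab N.+2 h -> (m < N)%N -> h m m.+2 != None ->
  exists p, forall b, cnt b N.+1 (rem h m.+1) = (cnt b N (rem (rem h m.+1) p) + 1)%N.
Proof.
move=> Th mN HX.
have [D1 A1 B1] := Th m m (leqnn _) ltac:(lia).
have [D3 A3 B3] := Th m.+2 m.+2 (leqnn _) ltac:(lia).
have [_ AX BX] := Th m m.+2 ltac:(lia) ltac:(lia).
have d1 : h m m = Some true.
  case E: (h m m) (D1 erefl) => [[|]|] //= _.
  by move: HX; rewrite (B1 E m.+2) //; lia.
have d3 : h m.+2 m.+2 = Some false.
  case E: (h m.+2 m.+2) (D3 erefl) => [[|]|] //= _.
  by move: HX; rewrite (A3 E m) //; lia.
have bm : bump m.+1 m = m by rewrite /bump; lia.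
have bm1 : bump m.+1 m.+1 = m.+2 by rewrite /bump; lia.
case EX: (h m m.+2) HX => [[|]|] // _.
- exists m.+1 => b.
  have H : hook_is N (rem h m.+1) m.+1 false true false.
    move=> s t st tN.
    case: (eqVneq s m.+1) => [Es|sn] /=.
    + subst s; move=> _; rewrite /hookpat eqxx /rem bm1.
      case: (eqVneq t m.+1) => [->|tn] //=; first by rewrite bm1.
      by apply: B3 => //; rewrite /bump; lia.
    + move=> /eqP Et; subst t; rewrite /hookpat (negbTE sn) eqxx /= /rem bm1.
      case: (eqVneq s.+1 m.+1) => [[->]|sm] /=; first by rewrite bm.
      rewrite (_ : bump m.+1 s = s); last by rewrite /bump; lia.
      by apply: AX => //; lia.
  rewrite (cnt_hook b H) //; case: b; lia.
- exists m => b.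
  have H : hook_is N (rem h m.+1) m true false true.
    move=> s t st tN.
    case: (eqVneq s m) => [Es|sn] /=.
    + subst s; move=> _; rewrite /hookpat eqxx /rem bm.
      case: (eqVneq t m) => [->|tn] //=; first by rewrite bm.
      case: (eqVneq t m.+1) => [->|tn2] //=; first by rewrite bm1.
      by apply: BX => //; rewrite /bump; lia.
    + move=> /eqP Et; subst t; rewrite /hookpat (negbTE sn) eqxx /= /rem bm.
      rewrite (_ : bump m.+1 s = s); last by rewrite /bump; lia.
      by apply: A1 => //; lia.
  rewrite (cnt_hook b H) //; case: b; lia.
Qed.

Definition insw (d : nat -> bool) q : nat -> bool :=
  if d q then (fun r => if r == q.+1 then false else d (r - (q.+1 < r)))
  else (fun r => if r == q then true else d (r - (q < r))).

Definition cw (d : nat -> bool) L : nat := \sum_(r < L) d r.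

Lemma cwS d L : cw d L.+1 = (cw d L + d L)%N.
Proof. by rewrite /cw big_ord_recr. Qed.

Lemma cw_insw d q L : cw (insw d q) L =
  if d q then (if (L <= q.+1)%N then cw d L else cw d L.-1)
  else (if (L <= q)%N then cw d L else (cw d L.-1).+1).
Proof.
elim: L => [|L IH]; first by rewrite /cw !big_ord0; case: (d q).
rewrite cwS IH /insw.
case Dq: (d q).
- case: (ltngtP L q.+1) => HL /=.
  + by rewrite subn0 cwS.
  + have L0 : (0 < L)%N by lia.
    by rewrite subn1 -[in RHS](prednK L0) cwS.
  + by rewrite addn0.
- case: (ltngtP L q) => HL /=.
  + by rewrite subn0 cwS.
  + have L0 : (0 < L)%N by lia.
    by rewrite subn1 -[in RHS](prednK L0) cwS addSn.
  + by rewrite addn1.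
Qed.

Lemma cw_ext d1 d2 L L' : (L' <= L)%N -> (forall r, (r < L)%N -> d1 r = d2 r) ->
  cw d1 L' = cw d2 L'.
Proof. by move=> LL E; apply: eq_bigr => r _; rewrite E //; apply: leq_trans LL. Qed.

Lemma insw_inj_lt d q q' L : (q < q')%N -> (q'.+2 <= L)%N ->
  (forall r, (r < L)%N -> insw d q r = insw d q' r) -> False.
Proof.
move=> qq qL E.
have C := fun L' (H : (L' <= L)%N) => @cw_ext (insw d q) (insw d q') L L' H E.
case Dq: (d q); case Dq': (d q').
- have := C q'.+1 ltac:(lia); rewrite !cw_insw Dq Dq' cwS Dq'.
  by rewrite ifF ?leqnn //=; [lia | lia].
- have := C L (leqnn _); rewrite !cw_insw Dq Dq'.
  by rewrite ifF ?ifF //; lia.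
- have := C L (leqnn _); rewrite !cw_insw Dq Dq'.
  by rewrite ifF ?ifF //; lia.
- have := C q.+1 ltac:(lia); rewrite !cw_insw Dq Dq' cwS Dq.
  by rewrite ifF ?ifT //=; lia.
Qed.

Lemma insw_inj d q q' L : (q.+2 <= L)%N -> (q'.+2 <= L)%N ->
  (forall r, (r < L)%N -> insw d q r = insw d q' r) -> q = q'.
Proof.
move=> qL q'L E; case: (ltngtP q q') => // H.
- by case: (insw_inj_lt H q'L E).
- by case: (@insw_inj_lt d q' q L H qL) => r rL; rewrite E.
Qed.

Definition insS (W : nf) q : nf :=
  if W q q == Some true then ins W q.+1 false true false else ins W q true false true.

Definition dg (W : nf) : nat -> bool := fun r => W r r == Some true.

Lemma ins_diag W p c v hb r :
  ins W p c v hb r r = if r == p then Some c else W (r - (p < r)) (r - (p < r)).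
Proof. by rewrite /ins orbb; case: eqP => // ->; rewrite /hookpat eqxx. Qed.

Lemma diag_insS W q r : dg (insS W q) r = insw (dg W) q r.
Proof.
rewrite /dg /insS /insw; case: (W q q == Some true); rewrite ins_diag;
by case: (r == _).
Qed.

Lemma tab_insS M W q : tab M W -> (q < M)%N -> tab M.+1 (insS W q).
Proof.
move=> T qM; rewrite /insS; case: eqP => E.
- apply: tab_ins => // _; split => //.
- apply: tab_ins => //; first exact: ltnW.
  move=> _; split => //.
  have [D _ _] := T q q (leqnn _) qM.
  by case: (W q q) E (D erefl) => [[|]|].
Qed.

Lemma cnt_insS b M W q : (q < M)%N -> cnt b M.+1 (insS W q) = (cnt b M W + 1)%N.
Proof.
move=> qM; rewrite /insS; case: eqP => E.
- by rewrite cnt_ins //; case: b.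
- by rewrite cnt_ins //; [case: b | exact: ltnW].
Qed.

Lemma insw_low d q r : (r < q)%N -> insw d q r = d r.
Proof.
move=> rq; rewrite /insw; case: (d q).
- rewrite (_ : r == q.+1 = false); last lia.
  by rewrite (_ : (q.+1 < r)%N = false) ?subn0 //; lia.
- rewrite (_ : r == q = false); last lia.
  by rewrite (_ : (q < r)%N = false) ?subn0 //; lia.
Qed.


Definition Tfam (U : nf) K (i j : nat) : nf := insS (insS U i) (K + j).+1.

Lemma Tfam_inj N U i j i' j' : (i < N./2)%N -> (i' < N./2)%N ->
  (j < N - N./2)%N -> (j' < N - N./2)%N ->
  ffun_of N.+2 (Tfam U N./2 i j) = ffun_of N.+2 (Tfam U N./2 i' j') -> i = i' /\ j = j'.
Proof.
set K := N./2 => iK i'K jK j'K E.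
have E1 := ffun_diag E.
have E2 : forall r, (r < N.+2)%N ->
    insw (dg (insS U i)) (K + j).+1 r = insw (dg (insS U i')) (K + j').+1 r.
  move=> r rN; rewrite -!diag_insS /dg /Tfam in E1 *.
  by rewrite (E1 r rN).
have ii : i = i'.
  apply: (@insw_inj (dg U) i i' K.+1); [lia|lia|].
  move=> r rK; rewrite -!diag_insS.
  have := E2 r ltac:(lia); rewrite !insw_low //; lia.
subst i'; split => //.
have : (K + j).+1 = (K + j').+1.
  apply: (@insw_inj (dg (insS U i)) _ _ N.+2) => //; lia.
lia.
Qed.

Local Open Scope ring_scope.

Lemma eq_le' (R : realType) (x y : R) : x = y -> x <= y.
Proof. by move=> ->. Qed.

Lemma wt_ge0 (R : realType) (al be : R) n (T : filling n) : 0 <= al -> 0 <= be -> 0 <= wt al be T.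
Proof. by move=> a0 b0; rewrite /wt mulr_ge0 // exprn_ge0. Qed.

Lemma Z_ge1 (R : realType) (al be : R) n (T : filling n) : 0 <= al -> 0 <= be -> is_tableau T ->
  wt al be T <= \sum_(T' : filling n | is_tableau T') wt al be T'.
Proof.
move=> a0 b0 HT; rewrite (bigD1 T) //= lerDl.
by apply: sumr_ge0 => i _; exact: wt_ge0.
Qed.

Lemma Z_ge_sum (R : realType) (al be : R) n (I : finType) (F : I -> filling n) :
  0 <= al -> 0 <= be -> injective F -> (forall x, is_tableau (F x)) ->
  \sum_x wt al be (F x) <= \sum_(T' : filling n | is_tableau T') wt al be T'.
Proof.
move=> a0 b0 Fi HF.
rewrite -(big_imset (fun T => wt al be T) (in2W Fi)) /=.
rewrite [X in _ <= X](bigID (fun T => T \in [set F x | x in I])) /=.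
rewrite -[X in X <= _]addr0; apply: lerD; last by apply: sumr_ge0 => i _; exact: wt_ge0.
rewrite le_eqVlt; apply/orP; left; apply/eqP/eq_bigl => T.
apply/idP/andP => [H|[]//]; split => //.
by case/imsetP: H => x _ ->.
Qed.

Lemma famA (R : realType) (al be : R) N U : 0 < al -> 0 < be -> tab N U ->
  (N./2 * (N - N./2))%:R * (al ^+ (cnt true N U + 2) * be ^+ (cnt false N U + 2))
  <= \sum_(T' : filling N.+2 | is_tableau T') wt al be T'.
Proof.
move=> a0 b0 TU.
set K := N./2.
have KN : (K <= N)%N by rewrite /K; lia.
pose F (x : 'I_K * 'I_(N - K)) := ffun_of N.+2 (Tfam U K x.1 x.2).
have Fi : injective F.
  move=> [i j] [i' j'] E.
  have [e1 e2] := Tfam_inj (ltn_ord i) (ltn_ord i') (ltn_ord j) (ltn_ord j') E.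
  by rewrite (val_inj e1) (val_inj e2).
have HF : forall x, is_tableau (F x).
  move=> [i j]; have := ltn_ord i; have := ltn_ord j; rewrite /= => ? ?.
  by apply: tab_ffun; apply: tab_insS; [apply: tab_insS => //|]; rewrite /=; lia.
apply: (le_trans _ (Z_ge_sum (ltW a0) (ltW b0) Fi HF)); apply: eq_le'.
have -> : \sum_x wt al be (F x) = \sum_(x : 'I_K * 'I_(N - K)) (al ^+ (cnt true N U + 2) * be ^+ (cnt false N U + 2)).
  apply: eq_bigr => -[i j] _; have := ltn_ord i; have := ltn_ord j => jl il.
  rewrite /F wt_ffun /Tfam /= !cnt_insS; try lia.
  by rewrite -!addnA.
by rewrite sumr_const card_prod !card_ord mulr_natl.
Qed.

Lemma famBC (R : realType) (al be : R) N U (c : bool) : 0 < al -> 0 < be -> tab N U ->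
  al ^+ (cnt true N U + 2 * c) * be ^+ (cnt false N U + 2 * ~~ c)
  <= \sum_(T' : filling N.+2 | is_tableau T') wt al be T'.
Proof.
move=> a0 b0 TU.
have T2 : tab N.+2 (ins (ins U 0 c false false) 0 c false false).
  by apply: tab_ins => //; apply: tab_ins.
apply: (le_trans _ (Z_ge1 (ltW a0) (ltW b0) (tab_ffun T2))); apply: eq_le'.
rewrite wt_ffun !cnt_ins //.
clear T2; by case: c => /=; rewrite ?eqxx /= ?addn0 -?addnA.
Qed.

Local Close Scope ring_scope.

Lemma cell_hS n (S : filling n) i j : (0 < i)%N -> (0 < j)%N -> (j <= n)%N ->
  cell S i j = hS S i.-1 (n - j).
Proof.
move=> i0 j0 jn; rewrite /cell /hS i0 j0 /=.
have -> : n.-1 - (n - j) = j.-1 by lia.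
by case: insub => [x|] //; case: insub.
Qed.

Lemma nat_bound N : (1 <= N)%N -> ((N.+2) * (N.+2) <= 16 * (N./2 * (N - N./2)) + 9)%N.
Proof.
move=> N1; have := odd_double_half N; case: (odd N) => /= E.
- rewrite -E; set K := N./2; nia.
- rewrite -E; set K := N./2; nia.
Qed.

Lemma core N h m : tab N.+2 h -> (m < N)%N -> h m m.+2 != None ->
  (h m m.+1 != None \/ h m.+1 m.+2 != None) ->
  exists U, tab N U /\ forall b, cnt b N.+2 h = (cnt b N U + 2)%N.
Proof.
move=> Th mN HX HRD.
have [p Hp] := stage2 Th mN HX.
exists (rem (rem h m.+1) p); split; first by do 2 apply: tab_rem.
by move=> b; rewrite (stage1 Th mN HX HRD) Hp -addnA.
Qed.

Local Open Scope ring_scope.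

Unset Implicit Arguments.

Theorem lemma4p1 (R : realType) :
  exists C : R, forall (alpha beta : R) (n k : nat) (S : filling n),
    0 < alpha -> 0 < beta -> (3 <= n)%N -> (1 <= k)%N -> (k <= n - 2)%N ->
    is_tableau S ->
    cell S (n - k - 1) k != None ->
    (cell S (n - k - 1) k.+1 != None \/ cell S (n - k) k != None) ->
    prob alpha beta S <= C / (n%:R + alpha^-1 + beta^-1) ^+ 2.
Proof.
exists 81 => al be n k S a0 b0 n3 k1 kn TS HX HRD.
case: n S TS HX HRD n3 kn => [|[|N]] S TS HX HRD n3 kn //.
set h := hS S.
have Th : tab N.+2 h := tab_hS TS.
have kN : (k <= N)%N by lia.
set m := (N - k)%N.
have mN : (m < N)%N by rewrite /m; lia.
have eX : cell S (N.+2 - k - 1) k = h m m.+2.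
  by rewrite cell_hS //; [congr hS; lia | lia | lia].
have eR : cell S (N.+2 - k - 1) k.+1 = h m m.+1.
  by rewrite cell_hS //; [congr hS; lia | lia | lia].
have eD : cell S (N.+2 - k) k = h m.+1 m.+2.
  by rewrite cell_hS //; [congr hS; lia | lia | lia].
rewrite eX in HX; rewrite eR eD in HRD.
have [U [TU cU]] := core Th mN HX HRD.
have wS : wt al be S = al ^+ (cnt true N U + 2) * be ^+ (cnt false N U + 2).
  by rewrite -{1}(ffun_hS TS) wt_ffun -/h !cU.
set Z := \sum_(T' : filling N.+2 | is_tableau T') wt al be T'.
set w := wt al be S.
have H1 : w <= Z := Z_ge1 (ltW a0) (ltW b0) TS.
have w0 : 0 < w by rewrite /w wS mulr_gt0 // exprn_gt0.
have Z0 : 0 < Z by apply: lt_le_trans H1.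
have H2 : w * (al^-1) ^+ 2 <= Z.
  apply: le_trans (famBC false a0 b0 TU); apply: eq_le'.
  rewrite /w wS /= !addn0 !exprD; field; by rewrite lt0r_neq0.
have H3 : w * (be^-1) ^+ 2 <= Z.
  apply: le_trans (famBC true a0 b0 TU); apply: eq_le'.
  rewrite /w wS /= !addn0 !exprD; field; by rewrite lt0r_neq0.
have H4 : (N./2 * (N - N./2))%:R * w <= Z by rewrite /w wS; exact: famA.
have H5 : (N.+2)%:R ^+ 2 <= 16 * (N./2 * (N - N./2))%:R + 9 :> R.
  move: (nat_bound (leq_trans k1 kN)); rewrite -(ler_nat R) natrD !natrM => Hn.
  by rewrite expr2.
set x := (N.+2)%:R : R; set a := al^-1; set b := be^-1.
set q := (N./2 * (N - N./2))%:R : R in H4 H5.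
have a00 : 0 <= a by rewrite /a invr_ge0 ltW.
have b00 : 0 <= b by rewrite /b invr_ge0 ltW.
have x00 : 0 < x by rewrite /x ltr0n.
have s0 : 0 < (x + a + b) ^+ 2 by rewrite exprn_gt0 // ltr_wpDr // ltr_wpDr.
rewrite /prob -/w -/Z ler_pdivrMr // mulrAC ler_pdivlMr //.
have Hsq : (x + a + b) ^+ 2 <= 3 * (x ^+ 2 + a ^+ 2 + b ^+ 2).
  rewrite -subr_ge0.
  have -> : 3 * (x ^+ 2 + a ^+ 2 + b ^+ 2) - (x + a + b) ^+ 2 =
    (x - a) ^+ 2 + (x - b) ^+ 2 + (a - b) ^+ 2 by ring.
  by rewrite !addr_ge0 // sqr_ge0.
have E1 : w * (x + a + b) ^+ 2 <= 3 * (w * x ^+ 2) + 3 * (w * a ^+ 2) + 3 * (w * b ^+ 2).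
  have := ler_wpM2l (ltW w0) Hsq; move/le_trans; apply; apply: eq_le'; ring.
have E2 : w * x ^+ 2 <= 16 * (q * w) + 9 * w.
  have := ler_wpM2l (ltW w0) H5; move/le_trans; apply; apply: eq_le'; ring.
have H2' : w * a ^+ 2 <= Z := H2.
have H3' : w * b ^+ 2 <= Z := H3.
lra.
Qed.
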